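(* Consider the one-ported gather/scatter tree model described in the context, with arbitrary block sizes $m_0,\dots,m_{p-1}\ge 0$ and arbitrary (possibly non-homogeneous) parameters $\alpha_{ij},\beta_{ij},\gamma_i\ge 0$. Let $P\subseteq\{0,\dots,p-1\}$ with $|P|\ge 2$ and let $r\in P$. Then the minimum of $\mathrm{cost}(T)$ over all communication trees $T$ on $P$ with root $r$ is equal to the minimum, over all partitions $P=R\cup\bar R$ into disjoint sets with $r\in R$, all $r'\in\bar R$, all communication trees $T_1$ on $R$ with root $r$ and all communication trees $T_2$ on $\bar R$ with root $r'$, of the quantity \[ \Phi=\begin{cases}\max(\gamma_r m_r,\ \mathrm{cost}(T_2))+\alpha_{r'r}+\beta_{r'r}\,\mathrm{Size}(\bar R) & \text{if } R=\{r\},\\[2pt] \max(\mathrm{cost}(T_1),\ \mathrm{cost}(T_2))+\alpha_{r'r}+\beta_{r'r}\,\mathrm{Size}(\bar R) & \text{if } |R|\ge 2.\end{cases} \]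
   Context: There are $p$ processors $0,\dots,p-1$; processor $i$ has a data block of size $m_i\ge 0$. For a set $R$ of processors, $\mathrm{Size}(R)=\sum_{i\in R}m_i$. For every ordered pair of distinct processors $i,j$ there are a start-up latency $\alpha_{ij}\ge 0$ and a time per unit $\beta_{ij}\ge 0$ (transmitting $s$ units from $i$ to $j$ costs $\alpha_{ij}+\beta_{ij}s$), and each processor $i$ has a local copy cost $\gamma_i\ge0$ per unit. Communication trees (used for gather and scatter): a communication tree on a nonempty finite set $R$ of processors with root $r\in R$ is either the trivial tree (only when $R=\{r\}$), or consists of the root $r$ together with a finite sequence of entries $(E_0,\dots,E_j)$ in which exactly one entry is a special ''local copy'' marker and every other entry $E_t$ is a communication tree on a set $R_t$ with root $r_t$, there is at least one such tree entry, and the sets $\{r\}$ and the $R_t$ form a partition of $R$ (the roots $r_t$ are the children of $r$). The completion time (one-ported model) is defined recursively: the trivial tree has cost $0$; otherwise put $c_{-1}=0$ and for $t=0,\dots,j$ let $c_t=c_{t-1}+\gamma_r m_r$ if $E_t$ is the local copy marker, and $c_t=\max(c_{t-1},\mathrm{cost}(E_t))+\alpha_{r_t r}+\beta_{r_t r}\,\mathrm{Size}(R_t)$ if $E_t$ is a tree on $R_t$ with root $r_t$; then $\mathrm{cost}(T)=c_j$. *)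

(* Defs.v *)
From HB Require Import structures.
From mathcomp Require Import all_boot all_order all_algebra.
Set Implicit Arguments. Unset Strict Implicit. Unset Printing Implicit Defensive.
Import Order.TTheory GRing.Theory Num.Theory.
Local Open Scope ring_scope.

(* Communication trees over processors 'I_p.  An entry of a node is either
   the local-copy marker (None) or a subtree (Some t). *)
Inductive ctree (p : nat) : Type :=
| Leaf of 'I_p
| Node of 'I_p & seq (option (ctree p)).

Section Trees.
Variable p : nat.

Definition root (t : ctree p) : 'I_p :=
  match t with Leaf r => r | Node r _ => r end.

Fixpoint supp (t : ctree p) : {set 'I_p} :=
  match t with
  | Leaf r => [set r]
  | Node r es =>
      r |: foldr (fun A B => A :|: B) set0
             (map (fun e => if e is Some c then supp c else set0) es)
  end.

Definition kid_supps (es : seq (option (ctree p))) : seq {set 'I_p} :=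
  pmap id (map (fun e => if e is Some c then Some (supp c) else None) es).

Definition is_copy (e : option (ctree p)) : bool :=
  if e is None then true else false.

Fixpoint wf (t : ctree p) : bool :=
  match t with
  | Leaf _ => true
  | Node r es =>
      [&& count is_copy es == 1%N,
          has (fun e => ~~ is_copy e) es,
          all id (map (fun e => if e is Some c then wf c else true) es),
          all (fun A : {set 'I_p} => r \notin A) (kid_supps es)
        & pairwise (fun A B : {set 'I_p} => [disjoint A & B]) (kid_supps es)]
  end.

Definition is_ctree (R : {set 'I_p}) (r : 'I_p) (t : ctree p) : bool :=
  [&& wf t, supp t == R & root t == r].

Variable K : realFieldType.
Variables (m gamma : 'I_p -> K) (alpha beta : 'I_p -> 'I_p -> K).

Definition Size (R : {set 'I_p}) : K := \sum_(i in R) m i.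

Fixpoint cost (t : ctree p) : K :=
  match t with
  | Leaf _ => 0
  | Node r es =>
      foldl (fun c (e : option ('I_p * {set 'I_p} * K)) =>
               match e with
               | None => c + gamma r * m r
               | Some (rt, Rt, ct) =>
                   Num.max c ct + alpha rt r + beta rt r * Size Rt
               end) 0
        (map (fun e => if e is Some t' then Some (root t', supp t', cost t')
                       else None) es)
  end.

End Trees.

Definition is_min (K : realFieldType) (S : K -> Prop) (x : K) : Prop :=
  S x /\ forall y, S y -> x <= y.

(* Main.v *)
Require Import Defs.
From mathcomp Require Import all_boot all_order all_algebra.
Import Order.TTheory GRing.Theory Num.Theory.
Local Open Scope ring_scope.

From mathcomp Require Import all_boot all_order all_algebra ring lra zify.
Import Order.TTheory GRing.Theory Num.Theory.
Local Open Scope ring_scope.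
Set Implicit Arguments. Unset Strict Implicit.

Section Aux.
Variable p : nat.
Implicit Types (A B : {set 'I_p}) (es : seq (option (ctree p))).

Lemma disjP A B : reflect (forall x, x \in A -> x \notin B) [disjoint A & B].
Proof.
rewrite disjoint_subset; apply: (iffP subsetP) => H x hx.
  by have := H x hx; rewrite inE.
by rewrite inE; exact: H.
Qed.

Lemma disjF A B x : [disjoint A & B] -> x \in A -> x \notin B.
Proof. by move/disjP; apply. Qed.

Definition U es : {set 'I_p} :=
  foldr (fun A B => A :|: B) set0
    (map (fun e => if e is Some c then supp c else set0) es).

Lemma suppNode r es : supp (Node r es) = r |: U es.
Proof. by []. Qed.

Lemma foldrU (s : seq {set 'I_p}) B :
  foldr (fun A B => A :|: B) B s = foldr (fun A B => A :|: B) set0 s :|: B.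
Proof. by elim: s => [|A s IH] /=; rewrite ?set0U // IH setUA. Qed.

Lemma U_cat (s t : seq (option (ctree p))) : U (s ++ t) = U s :|: U t.
Proof. by rewrite /U map_cat foldr_cat foldrU. Qed.

Lemma kid_cat (s t : seq (option (ctree p))) : kid_supps (s ++ t) = kid_supps s ++ kid_supps t.
Proof. by rewrite /kid_supps map_cat pmap_cat. Qed.

Lemma U_kid es : U es = foldr (fun A B => A :|: B) set0 (kid_supps es).
Proof.
elim: es => [|[c|] es IH] //.
  by rewrite /U /kid_supps /= -/(U es) IH.
by rewrite /U /kid_supps /= -/(U es) IH set0U.
Qed.

Lemma root_supp (t : ctree p) : Defs.root t \in supp t.
Proof. by case: t => [r|r es] /=; rewrite ?set11 ?setU11. Qed.

Lemma kid_nz es : all (fun A => A != set0) (kid_supps es).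
Proof.
elim: es => [|[c|] es IH] //.
rewrite /kid_supps /= -/(kid_supps es) IH andbT.
by apply/set0Pn; exists (Defs.root c); exact: root_supp.
Qed.

Lemma has_kid es : has (fun e => ~~ is_copy e) es -> kid_supps es != [::].
Proof.
elim: es => [|[c|] es IH] //=.
Qed.

Lemma sub_foldr A (s : seq {set 'I_p}) : A \in s -> A \subset foldr (fun A B => A :|: B) set0 s.
Proof.
elim: s => [|B s IH] //=; rewrite in_cons => /orP [/eqP -> | h].
  exact: subsetUl.
exact: subset_trans (IH h) (subsetUr _ _).
Qed.

Lemma disj_foldr (s : seq {set 'I_p}) B :
  all (fun A => [disjoint A & B]) s -> [disjoint foldr (fun A B => A :|: B) set0 s & B].
Proof.
elim: s => [|A s IH] hs.
  by apply/disjP => x; rewrite inE.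
move: hs => /= /andP [/disjP h1 /IH /disjP h2]; apply/disjP => x; rewrite inE => /orP [] ?;
  [exact: h1 | exact: h2].
Qed.

Lemma node_other r es : wf (Node r es) -> exists2 x, x \in U es & x != r.
Proof.
case/and5P => _ hk _ hr _.
have := has_kid hk; have := kid_nz es.
case E: (kid_supps es) => [|A s] //= /andP [/set0Pn [x hx] _] _.
exists x; last first.
  by apply/eqP => ex; move: hr; rewrite E /= -ex hx.
rewrite U_kid E /= inE hx //.
Qed.

End Aux.
Section Main.
Variable K : realFieldType.
Variable p : nat.
Variables (m gamma : 'I_p -> K) (alpha beta : 'I_p -> 'I_p -> K).
Hypotheses (hm : forall i, 0 <= m i) (hgamma : forall i, 0 <= gamma i).

Local Notation cst := (cost m gamma alpha beta).

Definition step (r : 'I_p) (c : K) (e : option ('I_p * {set 'I_p} * K)) :=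
  match e with
  | None => c + gamma r * m r
  | Some (rt, Rt, ct) => Num.max c ct + alpha rt r + beta rt r * Size m Rt
  end.

Definition fm (e : option (ctree p)) :=
  if e is Some t' then Some (Defs.root t', supp t', cst t') else None.

Lemma costNode r es : cst (Node r es) = foldl (step r) 0 (map fm es).
Proof. by []. Qed.

Lemma maxle (a a' b b' : K) : a <= a' -> b <= b' -> Num.max a b <= Num.max a' b'.
Proof.
move=> ha hb; rewrite ge_max !le_max.
by rewrite ha hb orbT.
Qed.

Lemma le_max_r' (a b : K) : b <= Num.max a b.
Proof. by rewrite le_max lexx orbT. Qed.

Lemma step_mono r c c' e : c <= c' -> step r c e <= step r c' e.
Proof.
case: e => [[[rt Rt] ct]|] /= h; rewrite ?lerD2r //.
by apply: maxle.
Qed.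

Lemma foldl_mono r l c c' : c <= c' -> foldl (step r) c l <= foldl (step r) c' l.
Proof.
elim: l c c' => [|e l IH] c c' h //=; apply: IH; exact: step_mono.
Qed.

Lemma step_shift r l c g : 0 <= g -> foldl (step r) (c + g) l <= foldl (step r) c l + g.
Proof.
move=> hg; elim: l c => [|e l IH] c //=.
apply: le_trans (IH _); apply: foldl_mono.
case: e => [[[rt Rt] ct]|] /=; last by rewrite addrAC.
have h : Num.max (c + g) ct <= Num.max c ct + g.
  rewrite ge_max lerD2r le_max lexx /=.
  by apply: le_trans (le_max_r' c ct) _; rewrite lerDl.
move: h; set M1 := Num.max (c + g) ct; set M2 := Num.max c ct => h.
by lra.
Qed.


Definition treeC (P : {set 'I_p}) (r : 'I_p) := fun x : K =>
    exists T : ctree p, is_ctree P r T /\ x = cst T.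

Definition splitC (P : {set 'I_p}) (r : 'I_p) := fun x : K =>
    exists (R Rb : {set 'I_p}) (r' : 'I_p) (T1 T2 : ctree p),
      [/\ R :|: Rb = P, [disjoint R & Rb], r \in R & r' \in Rb] /\
      [/\ is_ctree R r T1, is_ctree Rb r' T2 &
          x = (if R == [set r]
               then Num.max (gamma r * m r) (cst T2)
               else Num.max (cst T1) (cst T2))
              + alpha r' r + beta r' r * Size m Rb].

Lemma split_tree (P : {set 'I_p}) (r : 'I_p) (x : K) : splitC P r x -> treeC P r x.
Proof.
case=> R [Rb [r' [T1 [T2 [[hU hD hr hr'] [h1 /and3P [w2 /eqP s2 /eqP r2] ->]]]]]].
case: eqP => [eR | nR].
  exists (Node r [:: None; Some T2]); split; last first.
    by rewrite costNode /= add0r r2 s2.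
  apply/and3P; split => //=.
  - by rewrite w2 /kid_supps /= s2 /= !andbT (disjF hD hr).
  - by rewrite s2 -hU eR set0U setU0.
case: T1 h1 => [r0|r0 es] /and3P [w1 /eqP s1 /eqP r1].
  by move: s1 nR; rewrite -r1 /= => ->.
move: r1 => /= r1; subst r0.
exists (Node r (es ++ [:: Some T2])); split; last first.
  by rewrite !costNode map_cat foldl_cat /= r2 s2.
move: w1 => /= /and5P [c1 h1 a1 k1 p1].
apply/and3P; split => //=; last first.
  by rewrite -suppNode suppNode U_cat -hU -s1 suppNode /U /= s2 setU0 setUA.
rewrite count_cat addn0 c1 has_cat h1 /= map_cat all_cat a1 /= w2 /=.
rewrite kid_cat all_cat k1 /= s2 (disjF hD hr) //= pairwise_cat p1 /= andbT.
rewrite allrel1r ?s2; apply/allP => A hA.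
apply/disjP => y hy; apply: (disjF hD); rewrite -s1 /= inE; apply/orP; right.
rewrite -/(U es) U_kid; exact: (subsetP (sub_foldr hA)).
Qed.


Lemma cnt_some (L : seq (option (ctree p))) t :
  count (@is_copy p) (L ++ [:: Some t]) = count (@is_copy p) L.
Proof. by elim: L => //= e L ->. Qed.

Lemma cnt_none (L : seq (option (ctree p))) :
  count (@is_copy p) (L ++ [:: None]) = (count (@is_copy p) L).+1.
Proof. by elim: L => //= e L ->; rewrite addnS. Qed.

Lemma only_copy (es : seq (option (ctree p))) :
  count (@is_copy p) es == 1%N -> ~~ has (fun e => ~~ is_copy e) es -> es = [:: None].
Proof. by case: es => [|[c0|] [|[c1|] s]] //=. Qed.

Lemma tree_split1 (P : {set 'I_p}) (r : 'I_p) (es' : seq (option (ctree p))) (T2 : ctree p) :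
  is_ctree P r (Node r (es' ++ [:: Some T2])) ->
  splitC P r (cst (Node r (es' ++ [:: Some T2]))).
Proof.
case/and3P => w /eqP sP _.
rewrite /= in w; case/and5P: w => c h a k pw.
rewrite cnt_some in c.
rewrite map_cat all_cat /= andbT in a; case/andP: a => a w2.
rewrite kid_cat all_cat /= andbT in k; case/andP: k => k nr2.
rewrite kid_cat pairwise_cat /= andbT in pw; case/andP: pw => al pw.
rewrite allrel1r in al.
have eU : U [:: Some T2] = supp T2 by rewrite /U /= setU0.
have sP' : P = (r |: U es') :|: supp T2 by rewrite -sP suppNode U_cat eU setUA.
have disj : [disjoint r |: U es' & supp T2].
  apply/disjP => y; rewrite in_setU1 => /orP [/eqP -> // | hy].
  rewrite U_kid in hy; exact: disjF (disj_foldr al) hy.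
have r2 : Defs.root T2 \in supp T2 by exact: root_supp.
have i2 : is_ctree (supp T2) (Defs.root T2) T2 by rewrite /is_ctree w2 !eqxx.
case: (boolP (has (fun e => ~~ is_copy e) es')) => hk.
  have w1 : wf (Node r es') by rewrite /=; apply/and5P; split.
  rewrite /splitC; exists (r |: U es'), (supp T2), (Defs.root T2), (Node r es'), T2.
  split; first by split => //; rewrite ?setU11 ?set11 ?sP'.
  split => //; first by rewrite /is_ctree w1 suppNode !eqxx.
  have [y hy yr] := node_other w1.
  have -> : (r |: U es' == [set r]) = false.
    apply/negP => /eqP E; have : y \in [set r] by rewrite -E inE hy orbT.
    by rewrite inE (negPf yr).
  by rewrite !costNode map_cat foldl_cat.
have E := only_copy c hk; subst es'.
have eN : @U p [:: None] = set0 by apply/setP => x; rewrite /U /= !inE.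
rewrite eN setU0 in sP' disj.
rewrite /splitC; exists [set r], (supp T2), (Defs.root T2), (Leaf r), T2.
split; first by split => //; rewrite ?setU11 ?set11 ?sP'.
split => //; first by rewrite /is_ctree /= !eqxx.
by rewrite eqxx costNode /= add0r.
Qed.

Lemma U_None (L : seq (option (ctree p))) : U (None :: L) = U L.
Proof. by rewrite /U /= set0U. Qed.

Lemma swap_copy (P : {set 'I_p}) (r : 'I_p) (L : seq (option (ctree p))) :
  is_ctree P r (Node r (L ++ [:: None])) ->
  is_ctree P r (Node r (None :: L)) /\
  cst (Node r (None :: L)) <= cst (Node r (L ++ [:: None])).
Proof.
case/and3P => w /eqP sP _; split.
  apply/and3P; split => //; last by rewrite -sP !suppNode U_cat U_None /U /= !setU0.
  rewrite /= in w; case/and5P: w => c h a k pw.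
  rewrite cnt_none in c.
  rewrite has_cat /= orbF in h.
  rewrite map_cat all_cat /= andbT in a.
  rewrite kid_cat cats0 in k pw.
  by apply/and5P; split.
rewrite !costNode map_cat foldl_cat /=.
apply: step_shift; exact: mulr_ge0.
Qed.

Lemma tree_split (P : {set 'I_p}) (r : 'I_p) (T : ctree p) : (2 <= #|P|)%N -> is_ctree P r T ->
  exists2 y, splitC P r y & y <= cst T.
Proof.
move=> hP hT; case: T hT => [r0|r0 es] hT.
  case/and3P: hT => _ /eqP sP _; by move: hP; rewrite -sP /= cards1.
have r0e : r0 = r by case/and3P: hT => _ _ /eqP.
subst r0.
have w : wf (Node r es) by case/and3P: hT.
case/lastP E: es => [|es' e]; first by rewrite E in w.
subst es.
case: e hT w => [T2|] hT w; rewrite -cats1 in hT w *.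
  exists (cst (Node r (es' ++ [:: Some T2]))) => //.
  exact: tree_split1.
have c0 : count (@is_copy p) es' = 0%N.
  by rewrite /= in w; case/and5P: w => c _ _ _ _; move: c; rewrite cnt_none => /eqP [].
case/lastP E: es' c0 => [|es'' e]; first by move=> _; rewrite E in w.
subst es'.
case: e hT w => [T2|] hT w; rewrite -cats1 in hT w *; last first.
  by rewrite cnt_none.
move=> _.
have [hT' le'] := swap_copy hT.
rewrite -cat_cons in hT' le'.
exists (cst (Node r ((None :: es'') ++ [:: Some T2]))) => //.
exact: tree_split1.
Qed.


Lemma equiv_ts (P : {set 'I_p}) (r : 'I_p) (x : K) : (2 <= #|P|)%N ->
  is_min (treeC P r) x <-> is_min (splitC P r) x.
Proof.
move=> hP; split.
  case=> [[T [hT ->]] hmin].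
  have [y hy hle] := tree_split hP hT.
  have hge := hmin _ (split_tree hy).
  have ey : y = cst T by apply/le_anti; rewrite hle hge.
  split; first by rewrite -ey.
  by move=> z hz; apply: hmin; exact: split_tree.
case=> hs hmin; split; first exact: split_tree.
move=> y [T [hT ->]].
have [z hz hle] := tree_split hP hT.
exact: le_trans (hmin _ hz) hle.
Qed.

Lemma fin_min (T : eqType) (s : seq T) (S : T -> K -> Prop) : s != [::] ->
  (forall i, i \in s -> exists x, is_min (S i) x) ->
  exists x, is_min (fun y => exists2 i, i \in s & S i y) x.
Proof.
elim: s => [//|i s IH] _ H.
have [x1 [h1 m1]] := H i (mem_head _ _).
case: s IH H => [|j s] IH H.
  exists x1; split; first by exists i; rewrite ?mem_head.
  by move=> y [i']; rewrite inE => /eqP ->; apply: m1.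
have [|x2 [h2 m2]] := IH isT.
  by move=> k hk; apply: H; rewrite in_cons hk orbT.
have [le12|lt21] := leP x1 x2.
  exists x1; split; first by exists i; rewrite ?mem_head.
  move=> y [i']; rewrite in_cons => /orP [/eqP -> | hi] hy; first exact: m1.
  by apply: le_trans le12 _; apply: m2; exists i'.
exists x2; split.
  by case: h2 => k hk hk2; exists k => //; rewrite in_cons hk orbT.
move=> y [i']; rewrite in_cons => /orP [/eqP -> | hi] hy; last by apply: m2; exists i'.
by apply: le_trans (ltW lt21) _; apply: m1.
Qed.

Lemma card_lt (A P : {set 'I_p}) x : A \subset P -> x \in P -> x \notin A -> (#|A| < #|P|)%N.
Proof. by move=> hs hx hn; apply: proper_card; apply/properP; split => //; exists x. Qed.

Lemma exist_min n : forall (P : {set 'I_p}) (r : 'I_p), (#|P| <= n)%N -> r \in P ->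
  exists x, is_min (treeC P r) x.
Proof.
elim: n => [|n IH] P r hn hr.
  have : (0 < #|P|)%N by apply/card_gt0P; exists r.
  by rewrite leqn0 in hn; rewrite (eqP hn).
case: (leqP 2 #|P|) => hP2; last first.
  have eP : P = [set r].
    apply/esym/eqP; rewrite eqEcard sub1set hr cards1 /=; by rewrite -ltnS.
  subst P; exists 0; split.
    by exists (Leaf r); split => //; rewrite /is_ctree /= !eqxx.
  move=> y [[r0|r0 es] [hT ->]] //.
  case/and3P: hT => w /eqP sP /eqP r0e; rewrite /= in r0e; subst r0.
  have [z hz zr] := node_other w.
  have : z \in [set r] by rewrite -sP suppNode in_setU1 hz orbT.
  by rewrite in_set1 (negPf zr).
pose s := enum [pred q : {set 'I_p} * 'I_p | [&& q.1 \subset P, r \in q.1, q.2 \in P & q.2 \notin q.1]].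
pose F R r' a b := (if R == [set r] then Num.max (gamma r * m r) b else Num.max a b)
      + alpha r' r + beta r' r * Size m (P :\: R).
pose S (q : {set 'I_p} * 'I_p) y := exists T1 T2,
  [/\ is_ctree q.1 r T1, is_ctree (P :\: q.1) q.2 T2 & y = F q.1 q.2 (cst T1) (cst T2)].
have eqS : forall y, splitC P r y <-> exists2 q, q \in s & S q y.
  move=> y; split.
    case=> R [Rb [r' [T1 [T2 [[hU hD hrR hr'] [h1 h2 ->]]]]]].
    have eRb : P :\: R = Rb.
      by rewrite -hU setDUl setDv set0U; apply/setDidPl; rewrite disjoint_sym.
    exists (R, r').
      rewrite mem_enum inE /= hrR -hU subsetUl inE hr' orbT /=.
      by rewrite disjoint_sym in hD; rewrite (disjF hD hr').
    by rewrite /S /F /=; exists T1, T2; split; rewrite ?eRb.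
  case=> [[R r']] hq [T1 [T2 [h1 h2 ->]]].
  rewrite mem_enum inE /= in hq; case/and4P: hq => hsub hrR hr'P hr'R.
  exists R, (P :\: R), r', T1, T2; split; split => //.
  - apply/setP => z; rewrite !inE; case: (boolP (z \in R)) => hz //=.
    by rewrite (subsetP hsub z hz).
  - by apply/disjP => z hz; rewrite inE hz.
  - by rewrite inE hr'R hr'P.
have minS : forall q, q \in s -> exists x, is_min (S q) x.
  case=> R r' hq; rewrite mem_enum inE /= in hq; case/and4P: hq => hsub hrR hr'P hr'R.
  have hrP : r \in P by exact: (subsetP hsub).
  have [c1 [[T1 [h1 e1]] m1]] := IH R r (leq_trans (card_lt hsub hr'P hr'R) hn) hrR.
  have hd : P :\: R \subset P by apply: subsetDl.
  have hrn : r \notin P :\: R by rewrite inE hrR.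
  have hr'd : r' \in P :\: R by rewrite inE hr'R hr'P.
  have [c2 [[T2 [h2 e2]] m2]] := IH (P :\: R) r' (leq_trans (card_lt hd hrP hrn) hn) hr'd.
  exists (F R r' c1 c2); split.
    by rewrite /S; exists T1, T2; split => //=; rewrite e1 e2.
  move=> y [T1' [T2' [h1' h2' ->]]] /=.
  rewrite /F !lerD2r; case: ifP => _; apply: maxle => //.
    by apply: m2; exists T2'.
  by apply: m1; exists T1'.
  by apply: m2; exists T2'.
have ne : s != [::].
  have : (0 < #|P :\ r|)%N by move: hP2; rewrite (cardsD1 r P) hr add1n ltnS.
  case/card_gt0P => r'; rewrite in_setD1 => /andP [r'r r'P].
  have hq : ([set r], r') \in s.
    by rewrite mem_enum inE /= sub1set hr set11 r'P in_set1 r'r.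
  by apply/negP => /eqP E; rewrite E in hq.
have [x hx] := fin_min ne minS.
exists x; apply: (proj2 (equiv_ts r x hP2)); split.
  by apply/eqS; exact: hx.1.
by move=> y /eqS; exact: hx.2.
Qed.

End Main.

Unset Implicit Arguments.

Theorem proposition2 (K : realFieldType) (p : nat)
  (m gamma : 'I_p -> K) (alpha beta : 'I_p -> 'I_p -> K)
  (hm : forall i, 0 <= m i) (hgamma : forall i, 0 <= gamma i)
  (halpha : forall i j, i != j -> 0 <= alpha i j)
  (hbeta : forall i j, i != j -> 0 <= beta i j)
  (P : {set 'I_p}) (r : 'I_p) (hP : (2 <= #|P|)%N) (hr : r \in P) :
  let treeCosts := fun x : K =>
    exists T : ctree p, is_ctree P r T /\ x = cost m gamma alpha beta T in
  let splitCosts := fun x : K =>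
    exists (R Rb : {set 'I_p}) (r' : 'I_p) (T1 T2 : ctree p),
      [/\ R :|: Rb = P, [disjoint R & Rb], r \in R & r' \in Rb] /\
      [/\ is_ctree R r T1, is_ctree Rb r' T2 &
          x = (if R == [set r]
               then Num.max (gamma r * m r) (cost m gamma alpha beta T2)
               else Num.max (cost m gamma alpha beta T1) (cost m gamma alpha beta T2))
              + alpha r' r + beta r' r * Size m Rb] in
  (exists x, is_min treeCosts x) /\
  (forall x, is_min treeCosts x <-> is_min splitCosts x).
Proof.
move=> tc sc; split.
  exact: (exist_min alpha beta hm hgamma (leqnn #|P|) hr).
move=> x; exact: (equiv_ts alpha beta hm hgamma r x hP).
Qed.
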